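(* In the Popularity Adjusted Block Model described in the context, suppose $\operatorname{rank}(\boldsymbol\Theta)=K^2$, and let $\boldsymbol\Xi=(\xi_{iu})\in\mathbb R^{n\times K^2}$ be a matrix whose columns are orthonormal eigenvectors of $\boldsymbol\Theta$ corresponding to its $K^2$ nonzero eigenvalues. For $k\in[K]$ let $\boldsymbol\Xi^{(k)}=(\xi_{iu})_{i:\boldsymbol c^\ast(i)=k,\,u\in[K^2]}$ and $\boldsymbol\Lambda^{(k,\cdot)}=(\lambda_{il})_{i:\boldsymbol c^\ast(i)=k,\,l\in[K]}$. Then for each $k\in[K]$, $$\boldsymbol\Xi^{(k)}=\boldsymbol\Lambda^{(k,\cdot)}\boldsymbol Z_k,$$ where $\boldsymbol Z_k\in\mathbb R^{K\times K^2}$ satisfies $\boldsymbol Z_k\boldsymbol Z_l^\top=\boldsymbol 0_{K\times K}$ for each $l\ne k$ and $\boldsymbol Z_k\boldsymbol Z_k^\top=(\boldsymbol\Lambda^{(k,\cdot)\top}\boldsymbol\Lambda^{(k,\cdot)})^{-1}$.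
   Context: Notation: $[m]=\{1,\dots,m\}$. Popularity Adjusted Block Model: integers $n$, $K\ge2$, a community label vector $\boldsymbol c^\ast\in[K]^n$, a popularity matrix $\boldsymbol\Lambda=(\lambda_{ik})\in[0,1]^{n\times K}$. The edge probability matrix is $\boldsymbol\Theta=(\theta_{ij})_{n\times n}$ with $\theta_{ij}=\lambda_{i\boldsymbol c^\ast(j)}\lambda_{j\boldsymbol c^\ast(i)}$ for all $i,j\in[n]$ (a symmetric matrix). Submatrices indexed by ''$i:\boldsymbol c^\ast(i)=k$'' keep the rows $i$ with $\boldsymbol c^\ast(i)=k$ in increasing order of $i$. *)

(* Defs.v *)
From HB Require Import structures.
From mathcomp Require Import all_boot all_order all_algebra.
From mathcomp Require Import reals.
Set Implicit Arguments. Unset Strict Implicit. Unset Printing Implicit Defensive.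
Import Order.TTheory GRing.Theory Num.Theory.
Local Open Scope ring_scope.

Definition comm {n K : nat} (c : 'I_n -> 'I_K) (k : 'I_K) : {set 'I_n} :=
  [set i | c i == k].

(* The r-th node (in increasing order of index) of community k. *)
Definition comm_row {n K : nat} (c : 'I_n -> 'I_K) (k : 'I_K)
  (r : 'I_#|comm c k|) : 'I_n := enum_val r.

Definition comm_sub {R : Type} {n K m : nat} (c : 'I_n -> 'I_K) (k : 'I_K)
  (A : 'M[R]_(n, m)) : 'M[R]_(#|comm c k|, m) :=
  rowsub (@comm_row n K c k) A.

Definition pabm_Theta {R : pzRingType} {n K : nat} (c : 'I_n -> 'I_K)
  (Lam : 'M[R]_(n, K)) : 'M[R]_n :=
  \matrix_(i, j) (Lam i (c j) * Lam j (c i)).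

(* Main.v *)
Require Import Defs.
From HB Require Import structures.
From mathcomp Require Import all_boot all_order all_algebra.
From mathcomp Require Import reals.
Import Order.TTheory GRing.Theory Num.Theory.
Local Open Scope ring_scope.

Section Helpers.
Variable R : realType.

Definition pr {K : nat} (p : 'I_(K * K)) : 'I_K * 'I_K :=
  enum_val (cast_ord (esym (mxvec_cast K K)) p).

Lemma prK K (k l : 'I_K) : pr (mxvec_index k l) = (k, l).
Proof. by rewrite /pr /mxvec_index cast_ordK enum_rankK. Qed.

Lemma sumKK K (F : 'I_(K * K) -> R) :
  \sum_(p < K * K) F p = \sum_(k < K) \sum_(l < K) F (mxvec_index k l).
Proof.
rewrite (reindex _ (curry_mxvec_bij _ _)) /= pair_bigA /=.
by apply: eq_bigr => -[].
Qed.

Lemma sum_delta K (a : 'I_K) (F : 'I_K -> R) :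
  \sum_(k < K) (a == k)%:R * F k = F a.
Proof.
rewrite (bigD1 a) //= eqxx mul1r big1 ?addr0 // => k hk.
by rewrite eq_sym (negbTE hk) mul0r.
Qed.

Lemma idx_eq K (k l k' l' : 'I_K) :
  (mxvec_index k l == mxvec_index k' l') = (k == k') && (l == l').
Proof.
apply/eqP/andP => [h|[/eqP-> /eqP->]] //.
by have := congr1 (@pr K) h; rewrite !prK => -[-> ->].
Qed.
End Helpers.

Theorem proposition1 (R : realType) (n K : nat) (hK : (2 <= K)%N)
  (c : 'I_n -> 'I_K) (Lam : 'M[R]_(n, K))
  (hLam : forall i l, 0 <= Lam i l <= 1)
  (hrank : \rank (pabm_Theta c Lam) = (K * K)%N)
  (Xi : 'M[R]_(n, K * K)) (d : 'rV[R]_(K * K))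
  (hortho : Xi^T *m Xi = 1%:M)
  (heig : pabm_Theta c Lam *m Xi = Xi *m diag_mx d)
  (hd : forall u, d 0 u != 0) :
  exists Z : 'I_K -> 'M[R]_(K, K * K),
    forall k : 'I_K,
      [/\ comm_sub c k Xi = comm_sub c k Lam *m Z k,
          (forall l : 'I_K, l != k -> Z k *m (Z l)^T = 0),
          (comm_sub c k Lam)^T *m comm_sub c k Lam \in unitmx
        & Z k *m (Z k)^T = invmx ((comm_sub c k Lam)^T *m comm_sub c k Lam)].
Proof.
pose B : 'M[R]_(n, K * K) :=
  \matrix_(i, p) ((c i == (pr p).1)%:R * Lam i (pr p).2).
pose C : 'M[R]_(n, K * K) :=
  \matrix_(i, p) ((c i == (pr p).2)%:R * Lam i (pr p).1).
have hTh : pabm_Theta c Lam = B *m C^T.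
  apply/matrixP => i j; rewrite !mxE sumKK.
  under eq_bigr => k _ do under eq_bigr => l _ do
    rewrite !mxE prK /= mulrACA -mulrA.
  under eq_bigr => k _ do rewrite -big_distrr /=.
  by rewrite sum_delta sum_delta.
pose dinv : 'rV[R]_(K * K) := \row_u (d 0 u)^-1.
pose W := C^T *m Xi *m diag_mx dinv.
have hXi : Xi = B *m W.
  rewrite /W !mulmxA -hTh heig -mulmxA.
  suff -> : diag_mx d *m diag_mx dinv = 1%:M by rewrite mulmx1.
  rewrite mul_diag_mx; apply/matrixP => i j; rewrite !mxE.
  have [->|ne] := eqVneq i j; first by rewrite !mulr1n mulfV.
  by rewrite !mulr0n mulr0.
clearbody W.
pose Z := fun k : 'I_K => \matrix_(l < K, u < K * K) W (mxvec_index k l) u.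
pose Gk := fun k : 'I_K => (comm_sub c k Lam)^T *m comm_sub c k Lam.
pose G := B^T *m B.
have hG : forall k l1 k' l', G (mxvec_index k l1) (mxvec_index k' l') =
    (k' == k)%:R * Gk k l1 l'.
  move=> k l1 k' l'; rewrite /G /Gk !mxE.
  have [->|ne] := eqVneq k' k.
    rewrite mul1r.
    under eq_bigr => i _ do rewrite !mxE !prK /= mulrACA -natrM mulnb andbb.
    under eq_bigr => i _ do rewrite mulr_natl mulrb.
    rewrite -big_mkcond /=.
    rewrite (eq_bigl (fun i => i \in comm c k)); last by move=> i; rewrite inE.
    rewrite big_enum_val; apply: eq_bigr => r _.
    by rewrite /comm_sub !mxE.
  rewrite mul0r big1 // => i _; rewrite !mxE !prK /= mulrACA -natrM mulnb.
  have [ck|] := eqVneq (c i) k; last by rewrite mul0r.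
  by rewrite ck eq_sym (negbTE ne) mul0r.
have hWW : G *m (W *m W^T) = 1%:M.
  have h1 : W^T *m (G *m W) = 1%:M.
    by rewrite /G -hortho [in RHS]hXi trmx_mul !mulmxA.
  by rewrite mulmxA; apply: mulmx1C.
have key : forall k l, Gk k *m (Z k *m (Z l)^T) = if k == l then 1%:M else 0.
  move=> k l; apply/matrixP => l1 l2.
  have := congr1 (fun M : 'M[R]_(K * K) => M (mxvec_index k l1) (mxvec_index l l2)) hWW => /=.
  rewrite [in X in _ = X]mxE idx_eq mxE sumKK.
  under eq_bigr => k' _ do under eq_bigr => l' _ do rewrite hG -mulrA eq_sym.
  under eq_bigr => k' _ do rewrite -big_distrr /=.
  rewrite sum_delta => h.
  have -> : (if k == l then 1%:M else 0 : 'M[R]_K) l1 l2 =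
      ((k == l) && (l1 == l2))%:R.
    by case: (k == l); rewrite !mxE.
  rewrite -h mxE; apply: eq_bigr => l' _; congr (_ * _).
  by rewrite !mxE; apply: eq_bigr => u _; rewrite !mxE.
have hu : forall k, Gk k \in unitmx.
  by move=> k; have := key k k; rewrite eqxx => /mulmx1_unit [].
have hZ : forall k l, Z k *m (Z l)^T = invmx (Gk k) *m (Gk k *m (Z k *m (Z l)^T)).
  by move=> k l; rewrite mulKmx // hu.
exists Z => k; split.
- rewrite hXi; apply/matrixP => r u; rewrite /comm_sub !mxE sumKK.
  under eq_bigr => k' _ do under eq_bigr => l _ do rewrite !mxE prK /= -mulrA.
  under eq_bigr => k' _ do rewrite -big_distrr /=.
  rewrite sum_delta.
  have : @comm_row n K c k r \in comm c k by rewrite /comm_row enum_valP.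
  rewrite inE => /eqP ->.
  by apply: eq_bigr => l _; rewrite !mxE.
- by move=> l lk; rewrite hZ key eq_sym (negbTE lk) mulmx0.
- exact: hu.
- by rewrite hZ key eqxx mulmx1.
Qed.
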